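(* Let $K$ be a field, $V$ a vector space over $K$, and $f_L,f_R,g_L,g_R:V\to V$ linear maps, each of them nonzero. Let $\delta,\gamma\in K$ with $(\delta,\gamma)\ne(0,0)$. Then every $(\delta,\gamma)$-derivation $D$ of the algebra $A(f_L,f_R,g_L,g_R)$ has the form $$D(e)=\begin{cases}0&\text{if }\delta+\gamma\ne1,\\ \beta e&\text{if }\delta+\gamma=1,\end{cases}\qquad D(a)=\alpha a+v_a+w_a',$$ $$D(v)=\varphi(v)+\psi(v)',\qquad D(v')=\widetilde\varphi(v)+\widetilde\psi(v)'\quad(v\in V),$$ for some $\alpha,\beta\in K$, $v_a,w_a\in V$ and linear maps $\varphi,\widetilde\varphi,\psi,\widetilde\psi:V\to V$, which satisfy $$(\delta f_R+\gamma f_L)(v_a)=0,\qquad (\delta g_R+\gamma g_L)(w_a)=0,$$ and $$\begin{aligned} \widetilde\varphi\circ f_L&=\gamma\, g_L\circ\psi, & \widetilde\psi\circ f_L&=\delta\alpha f_L+\gamma f_L\circ\varphi,\\ \widetilde\varphi\circ f_R&=\delta\, g_R\circ\psi, & \widetilde\psi\circ f_R&=\gamma\alpha f_R+\delta f_R\circ\varphi,\\ \varphi\circ g_L&=\delta\alpha g_L+\gamma g_L\circ\widetilde\psi, & \psi\circ g_L&=\gamma f_L\circ\widetilde\varphi,\\ \varphi\circ g_R&=\gamma\alpha g_R+\delta g_R\circ\widetilde\psi, & \psi\circ g_R&=\delta f_R\circ\widetilde\varphi. \end{aligned}$$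
   Context: For fixed $\delta,\gamma\in K$, a $(\delta,\gamma)$-derivation of an algebra $A$ is a linear map $D:A\to A$ with $D(xy)=\delta D(x)y+\gamma xD(y)$ for all $x,y\in A$. Let $V'$ be a second copy of $V$, identified with $V$ via a linear bijection $v\mapsto v'$. The algebra $A(f_L,f_R,g_L,g_R)$ is the vector space $Ke\oplus Ka\oplus V\oplus V'$ (with $e,a$ two new basis elements) with bilinear multiplication determined by $e^2=e$, $a^2=0$, $av=f_L(v)'$, $va=f_R(v)'$, $av'=g_L(v)$, $v'a=g_R(v)$ for $v\in V$, and all other products among $e$, $a$, elements of $V$ and elements of $V'$ equal to zero. (No associativity of this algebra is assumed in the lemma.) *)

(* Defs.v *)
From HB Require Import structures.
From mathcomp Require Import all_boot all_order all_algebra.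
Set Implicit Arguments. Unset Strict Implicit. Unset Printing Implicit Defensive.
Import GRing.Theory.
Local Open Scope ring_scope.

(* The algebra A(fL,fR,gL,gR) = K e (+) K a (+) V (+) V', represented as
   the product K * K * V * V (components: e-coeff, a-coeff, V part, V' part). *)
Definition algA (K : fieldType) (V : lmodType K) := (K^o * K^o * V * V)%type.

(* Bilinear multiplication determined by e^2 = e, a^2 = 0, a v = fL(v)',
   v a = fR(v)', a v' = gL(v), v' a = gR(v), all other basis products 0. *)
Definition mulAlg (K : fieldType) (V : lmodType K) (fL fR gL gR : V -> V)
  (x y : algA V) : algA V :=
  let '(e1, a1, v1, w1) := x in
  let '(e2, a2, v2, w2) := y in
  ((e1 * e2 : K^o), (0 : K^o),
   a1 *: gL w2 + a2 *: gR w1,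
   a1 *: fL v2 + a2 *: fR v1).

Definition eA (K : fieldType) (V : lmodType K) : algA V := ((1 : K^o), (0 : K^o), 0, 0).
Definition aA (K : fieldType) (V : lmodType K) : algA V := ((0 : K^o), (1 : K^o), 0, 0).
Definition inV (K : fieldType) (V : lmodType K) (v : V) : algA V := ((0 : K^o), (0 : K^o), v, 0).
Definition inV' (K : fieldType) (V : lmodType K) (v : V) : algA V := ((0 : K^o), (0 : K^o), 0, v).

Definition is_dg_derivation (K : fieldType) (A : lmodType K)
  (mul : A -> A -> A) (delta gamma : K) (D : A -> A) : Prop :=
  linear D /\ forall x y, D (mul x y) = delta *: mul (D x) y + gamma *: mul x (D y).

(* Main.v *)
Require Import Defs.
From Stdlib Require Import Classical.
From HB Require Import structures.
From mathcomp Require Import all_boot all_order all_algebra.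
Import GRing.Theory.
Local Open Scope ring_scope.
Set Implicit Arguments. Unset Strict Implicit.
Section S.
Variables (K : fieldType) (U W : lmodType K).
Definition mkLin (f : U -> W) (hf : linear f) : {linear U -> W} :=
  HB.pack f (GRing.isLinear.Build K U W *:%R f hf).
Lemma mkLinE f hf x : @mkLin f hf x = f x. Proof. by []. Qed.
Lemma pairZ (k : K) (x : U) (y : W) : k *: (x, y) = (k *: x, k *: y). Proof. by []. Qed.
Lemma pairD (x x' : U) (y y' : W) : (x, y) + (x', y') = (x + x', y + y'). Proof. by []. Qed.
Lemma pair0 : (0 : U * W) = (0, 0). Proof. by []. Qed.
End S.
Lemma ko (K : fieldType) (k x : K^o) : k *: x = k * x. Proof. by []. Qed.
Lemma pair4 (A B C E : Type) (a a' : A) (b b' : B) (c c' : C) (d d' : E) :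
  (a, b, c, d) = (a', b', c', d') -> [/\ a = a', b = b', c = c' & d = d'].
Proof. by case=> -> -> -> ->. Qed.
Lemma kill (K : fieldType) (d g x : K) : d != 0 \/ g != 0 -> 0 = g * x -> 0 = d * x -> x = 0.
Proof.
case=> /negbTE hz h1 h2; [move/esym/eqP: h2 | move/esym/eqP: h1]; by rewrite mulf_eq0 hz /= => /eqP.
Qed.
Lemma kill2 (K : fieldType) (V : lmodType K) (k x : K) (w : V) : w != 0 -> k != 0 -> 0 = k *: (x *: w) -> x = 0.
Proof.
move=> /negbTE hw /negbTE hk /esym/eqP; rewrite scalerA scaler_eq0 hw mulf_eq0 hk /= orbF.
by move/eqP.
Qed.
Ltac simpin H := do 3 rewrite ?pairZ ?pairD ?ko ?scale0r ?scaler0 ?scale1r ?addr0 ?add0r ?raddf0 ?mulr0 ?mul0r ?mulr1 ?mul1r in H.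
Ltac simp := do 3 rewrite ?pairZ ?pairD ?ko ?scale0r ?scaler0 ?scale1r ?addr0 ?add0r ?raddf0 ?mulr0 ?mul0r ?mulr1 ?mul1r.

Unset Implicit Arguments.
Set Strict Implicit.
Theorem lemma2 (K : fieldType) (V : lmodType K)
  (fL fR gL gR : {linear V -> V})
  (hfL : ~ (forall v, fL v = 0)) (hfR : ~ (forall v, fR v = 0))
  (hgL : ~ (forall v, gL v = 0)) (hgR : ~ (forall v, gR v = 0))
  (delta gamma : K) (hdg : (delta, gamma) != (0, 0))
  (D : algA V -> algA V)
  (hD : is_dg_derivation (mulAlg fL fR gL gR) delta gamma D) :
  exists (alpha beta : K) (va wa : V) (phi phit psi psit : {linear V -> V}),
    [/\ D (eA V) = (if delta + gamma == 1 then beta *: eA V else 0),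
        D (aA V) = alpha *: aA V + inV va + inV' wa,
        (forall v, D (inV v) = inV (phi v) + inV' (psi v)),
        (forall v, D (inV' v) = inV (phit v) + inV' (psit v)) &
        delta *: fR va + gamma *: fL va = 0 /\ delta *: gR wa + gamma *: gL wa = 0] /\
    [/\ forall v, phit (fL v) = gamma *: gL (psi v),
        forall v, psit (fL v) = (delta * alpha) *: fL v + gamma *: fL (phi v),
        forall v, phit (fR v) = delta *: gR (psi v) &
        forall v, psit (fR v) = (gamma * alpha) *: fR v + delta *: fR (phi v)] /\
    [/\ forall v, phi (gL v) = (delta * alpha) *: gL v + gamma *: gL (psit v),
        forall v, psi (gL v) = gamma *: fL (phit v),
        forall v, phi (gR v) = (gamma * alpha) *: gR v + delta *: gR (psit v) &
        forall v, psi (gR v) = delta *: fR (phit v)].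
Proof.
case: hD => Dlin Dmul.
pose DL := mkLin Dlin.
have D0 : D ((0 : K^o), (0 : K^o), (0 : V), (0 : V)) = ((0 : K^o), (0 : K^o), (0 : V), (0 : V)) := linear0 DL.
have DD : forall x y, D (x + y) = D x + D y by move=> x y; exact: (raddfD DL x y).
have DZ : forall (k : K) x, D (k *: x) = k *: D x by move=> k x; have := linearZ_LR DL k x.
have hdg' : delta != 0 \/ gamma != 0.
  by move: hdg; rewrite xpair_eqE negb_and => /orP.
have nz : forall (f : {linear V -> V}), ~ (forall v, f v = 0) -> exists v, f v != 0.
  move=> f hf; apply: NNPP => hn; apply: hf => v; apply/eqP/negPn/negP => h; apply: hn; by exists v.
have [vfL hvfL] := nz fL hfL.
have [vfR hvfR] := nz fR hfR.
have [vgL hvgL] := nz gL hgL.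
have [vgR hvgR] := nz gR hgR.
have split : forall x : algA V, x = (x.1.1.1, x.1.1.2, x.1.2, x.2) by case=> [[[? ?] ?] ?].
pose ev v := (D (inV v)).1.1.1.
pose lv v := (D (inV v)).1.1.2.
pose phi0 v := (D (inV v)).1.2.
pose psi0 v := (D (inV v)).2.
pose ew v := (D (inV' v)).1.1.1.
pose lw v := (D (inV' v)).1.1.2.
pose phit0 v := (D (inV' v)).1.2.
pose psit0 v := (D (inV' v)).2.
have DV : forall v, D (inV v) = (ev v, lv v, phi0 v, psi0 v) := fun v => split _.
have DW : forall v, D (inV' v) = (ew v, lw v, phit0 v, psit0 v) := fun v => split _.
case DEe: (D (eA V)) => [[[eps ae] p] q].
case DAe: (D (aA V)) => [[[ea alpha] va] wa].
have Pee : mulAlg fL fR gL gR (eA V) (eA V) = eA V.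
  by rewrite /mulAlg /eA /=; simp.

pose Z : algA V := ((0 : K^o), (0 : K^o), (0 : V), (0 : V)).
have Pev : forall v, mulAlg fL fR gL gR (eA V) (inV v) = Z by move=> v; rewrite /mulAlg /=; simp.
have Pve : forall v, mulAlg fL fR gL gR (inV v) (eA V) = Z by move=> v; rewrite /mulAlg /=; simp.
have Pew : forall v, mulAlg fL fR gL gR (eA V) (inV' v) = Z by move=> v; rewrite /mulAlg /=; simp.
have Pwe : forall v, mulAlg fL fR gL gR (inV' v) (eA V) = Z by move=> v; rewrite /mulAlg /=; simp.
have Pea : mulAlg fL fR gL gR (eA V) (aA V) = Z by rewrite /mulAlg /=; simp.
have Pae : mulAlg fL fR gL gR (aA V) (eA V) = Z by rewrite /mulAlg /=; simp.
have Paa : mulAlg fL fR gL gR (aA V) (aA V) = Z .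
 rewrite /mulAlg /=; simp; by [].
have Pvw : forall v w, mulAlg fL fR gL gR (inV v) (inV' w) = Z by move=> v w; rewrite /mulAlg /=; simp.
have Pwv : forall v w, mulAlg fL fR gL gR (inV' w) (inV v) = Z by move=> v w; rewrite /mulAlg /=; simp.
have Pav : forall v, mulAlg fL fR gL gR (aA V) (inV v) = inV' (fL v) by move=> v; rewrite /mulAlg /=; simp.
have Pva : forall v, mulAlg fL fR gL gR (inV v) (aA V) = inV' (fR v) by move=> v; rewrite /mulAlg /=; simp.
have Paw : forall v, mulAlg fL fR gL gR (aA V) (inV' v) = inV (gL v) by move=> v; rewrite /mulAlg /=; simp.
have Pwa : forall v, mulAlg fL fR gL gR (inV' v) (aA V) = inV (gR v) by move=> v; rewrite /mulAlg /=; simp.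

have := Dmul (eA V) (eA V); rewrite Pee DEe /mulAlg /=; simp; move=> H; have [heps hae hp hq] := pair4 H; clear H.
simpin hp; simpin hq; subst ae p q.
have hev : forall v, ev v = 0.
  move=> v.
  have := Dmul (eA V) (inV v); rewrite Pev D0 DEe DV /mulAlg /=; simp; move=> H; have [h1 _ _ _] := pair4 H; clear H.
  have := Dmul (inV v) (eA V); rewrite Pve D0 DEe DV /mulAlg /=; simp; move=> H; have [h2 _ _ _] := pair4 H; clear H.
  exact: kill hdg' h1 h2.
have hew : forall v, ew v = 0.
  move=> v.
  have := Dmul (eA V) (inV' v); rewrite Pew D0 DEe DW /mulAlg /=; simp; move=> H; have [h1 _ _ _] := pair4 H; clear H.
  have := Dmul (inV' v) (eA V); rewrite Pwe D0 DEe DW /mulAlg /=; simp; move=> H; have [h2 _ _ _] := pair4 H; clear H.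
  exact: kill hdg' h1 h2.
have hea : ea = 0.
  have := Dmul (eA V) (aA V); rewrite Pea D0 DEe DAe /mulAlg /=; simp; move=> H; have [h1 _ _ _] := pair4 H; clear H.
  have := Dmul (aA V) (eA V); rewrite Pae D0 DEe DAe /mulAlg /=; simp; move=> H; have [h2 _ _ _] := pair4 H; clear H.
  exact: kill hdg' h1 h2.
subst ea.
have hlv : forall v, lv v = 0.
  move=> v.
  have := Dmul (inV v) (inV' vgL); rewrite Pvw D0 DV DW hev hew /mulAlg /=; simp; move=> H; have [_ _ h1 _] := pair4 H; clear H.
  have := Dmul (inV' vgR) (inV v); rewrite Pwv D0 DV DW hev hew /mulAlg /=; simp; move=> H; have [_ _ h2 _] := pair4 H; clear H.
  by case: hdg' => hz; [exact: kill2 hvgL hz h1 | exact: kill2 hvgR hz h2].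
have hlw : forall v, lw v = 0.
  move=> v.
  have := Dmul (inV vfR) (inV' v); rewrite Pvw D0 DV DW hev hew /mulAlg /=; simp; move=> H; have [_ _ _ h1] := pair4 H; clear H.
  have := Dmul (inV' v) (inV vfL); rewrite Pwv D0 DV DW hev hew /mulAlg /=; simp; move=> H; have [_ _ _ h2] := pair4 H; clear H.
  by case: hdg' => hz; [exact: kill2 hvfL hz h2 | exact: kill2 hvfR hz h1].
have DV' : forall v, D (inV v) = ((0 : K^o), (0 : K^o), phi0 v, psi0 v) by move=> v; rewrite DV hev hlv.
have DW' : forall v, D (inV' v) = ((0 : K^o), (0 : K^o), phit0 v, psit0 v) by move=> v; rewrite DW hew hlw.
have := Dmul (aA V) (aA V); rewrite Paa D0 DAe /mulAlg /=; simp; move=> H; have [_ _ haa1 haa2] := pair4 H; clear H.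
have hav : forall v, phit0 (fL v) = gamma *: gL (psi0 v) /\ psit0 (fL v) = (delta * alpha) *: fL v + gamma *: fL (phi0 v).
  move=> v.
  have := Dmul (aA V) (inV v); rewrite Pav DW' DV' DAe /mulAlg /=; simp; move=> H; have [_ _ h1 h2] := pair4 H; clear H.
  by rewrite scalerA in h2.
have hva : forall v, phit0 (fR v) = delta *: gR (psi0 v) /\ psit0 (fR v) = (gamma * alpha) *: fR v + delta *: fR (phi0 v).
  move=> v.
  have := Dmul (inV v) (aA V); rewrite Pva DW' DV' DAe /mulAlg /=; simp; move=> H; have [_ _ h1 h2] := pair4 H; clear H.
  by rewrite scalerA addrC in h2.
have haw : forall v, phi0 (gL v) = (delta * alpha) *: gL v + gamma *: gL (psit0 v) /\ psi0 (gL v) = gamma *: fL (phit0 v).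
  move=> v.
  have := Dmul (aA V) (inV' v); rewrite Paw DW' DV' DAe /mulAlg /=; simp; move=> H; have [_ _ h1 h2] := pair4 H; clear H.
  by rewrite scalerA in h1.
have hwa : forall v, phi0 (gR v) = (gamma * alpha) *: gR v + delta *: gR (psit0 v) /\ psi0 (gR v) = delta *: fR (phit0 v).
  move=> v.
  have := Dmul (inV' v) (aA V); rewrite Pwa DW' DV' DAe /mulAlg /=; simp; move=> H; have [_ _ h1 h2] := pair4 H; clear H.
  by rewrite scalerA addrC in h1.
have inVL : forall (k : K) (u w : V), inV (k *: u + w) = k *: inV u + inV w.
  by move=> k u w; rewrite /inV; simp.
have inWL : forall (k : K) (u w : V), inV' (k *: u + w) = k *: inV' u + inV' w.
  by move=> k u w; rewrite /inV'; simp.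
have Lphi : linear phi0 by move=> k u w; rewrite /phi0 inVL DD DZ.
have Lpsi : linear psi0 by move=> k u w; rewrite /psi0 inVL DD DZ.
have Lphit : linear phit0 by move=> k u w; rewrite /phit0 inWL DD DZ.
have Lpsit : linear psit0 by move=> k u w; rewrite /psit0 inWL DD DZ.
exists alpha, eps, va, wa, (mkLin Lphi), (mkLin Lphit), (mkLin Lpsi), (mkLin Lpsit).
rewrite /=.
split; last split.
- split.
  + case: ifP => h.
      by rewrite /eA; simp.
    have : (delta + gamma - 1) * eps = 0.
      by rewrite mulrBl mulrDl -heps mul1r subrr.
    move/eqP; rewrite mulf_eq0 subr_eq0 h /= => /eqP ->; by [].
  + by rewrite /aA /inV /inV'; simp.
  + by move=> v; rewrite DV' /inV /inV'; simp.
  + by move=> v; rewrite DW' /inV /inV'; simp.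
  + by split; apply: esym.
- split=> v; [exact: (hav v).1 | exact: (hav v).2 | exact: (hva v).1 | exact: (hva v).2].
- split=> v; [exact: (haw v).1 | exact: (haw v).2 | exact: (hwa v).1 | exact: (hwa v).2].
Qed.
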